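(* Let $\langle\nabla_1,t_1\rangle$ and $\langle\nabla_2,t_2\rangle$ be terms-in-context such that $t_1,\nabla_1$ and $t_2,\nabla_2$ have disjoint sets of variables. Then $\langle\nabla_1,t_1\rangle$ and $\langle\nabla_2,t_2\rangle$ are joinable, i.e. there exists a term-in-context $\langle\Gamma,s\rangle$ with $\langle\nabla_1,t_1\rangle\preceq\langle\Gamma,s\rangle$ and $\langle\nabla_2,t_2\rangle\preceq\langle\Gamma,s\rangle$, if and only if the nominal unification problem $\{t_1\approx^? t_2\}\cup\nabla_1\cup\nabla_2$ has a solution, i.e. there exist a freshness context $\Gamma$ and a substitution $\sigma$ with $\Gamma\vdash t_1\sigma\approx t_2\sigma$ and $\Gamma\vdash a\# X\sigma$ for every $a\# X\in\nabla_1\cup\nabla_2$.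
   Context: Nominal terms $t::=f(t_1,\dots,t_n)\mid a\mid a.t\mid \pi\cdot X$ over sorted atoms $a,b,\dots$, variables $X,Y,\dots$ and function symbols; $\pi$ ranges over permutations (finite sequences of swappings $(a\,b)$ of same-sorted atoms, inverse = reversed sequence), $\pi\bullet t$ is the swapping action ($(a\,b)$ exchanges $a$ and $b$ everywhere and $(a\,b)\bullet(\pi\cdot X)=((a\,b)\pi)\cdot X$). Substitutions $\sigma$ map variables to terms of the same sort; application $t\sigma$ allows atom capture and $(\pi\cdot X)\sigma=\pi\bullet(X\sigma)$. A freshness context is a finite set of constraints $a\# X$. Judgments: $\nabla\vdash a\approx a$; $\nabla\vdash a.t\approx a.t'$ if $\nabla\vdash t\approx t'$; $\nabla\vdash a.t\approx a'.t'$ if $a\neq a'$, $\nabla\vdash t\approx(a\,a')\bullet t'$ and $\nabla\vdash a\# t'$; $\nabla\vdash\pi\cdot X\approx\pi'\cdot X$ if $a\# X\in\nabla$ for all $a$ with $\pi\bullet a\neq\pi'\bullet a$; $\nabla\vdash f(t_1,..,t_n)\approx f(t'_1,..,t'_n)$ if $\nabla\vdash t_i\approx t'_i$ for all $i$; $\nabla\vdash a\# a'$ if $a\ne a'$; $\nabla\vdash a\#\pi\cdot X$ if $\pi^{-1}\bullet a\# X\in\nabla$; $\nabla\vdash a\# f(t_1,..,t_n)$ if $\nabla\vdash a\# t_i$ for all $i$; $\nabla\vdash a\# a.t$; $\nabla\vdash a\# a'.t$ if $a\ne a'$ and $\nabla\vdash a\# t$. The algorithm ${\sf FC}$ on a finite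 set $F$ of formulas $a\# t$: starting from $F;\emptyset$, apply as long as possible: $\{a\# b\}\uplus F';\Delta\Rightarrow F';\Delta$ if $a\neq b$; $\{a\# a.t\}\uplus F';\Delta\Rightarrow F';\Delta$; $\{a\# b.t\}\uplus F';\Delta\Rightarrow\{a\# t\}\cup F';\Delta$ if $a\neq b$; $\{a\# f(t_1,\dots,t_n)\}\uplus F';\Delta\Rightarrow \{a\# t_1,\dots,a\# t_n\}\cup F';\Delta$; $\{a\#\pi\cdot X\}\uplus F';\Delta\Rightarrow F';\{\pi^{-1}\bullet a\# X\}\cup\Delta$; the result is $\Delta$ if the terminal state is $\emptyset;\Delta$ and $\bot$ if it contains some $a\# a$. $\nabla\sigma:={\sf FC}(\{a\# X\sigma\mid a\# X\in\nabla\})$. $\sigma$ respects $\nabla$ if for every $X$, no atom $a$ with $a\# X\in\nabla$ occurs free in $X\sigma$ outside of suspensions. A term-in-context is a pair $\langle\nabla,t\rangle$; $\langle\nabla_1,t_1\rangle\preceq\langle\nabla_2,t_2\rangle$ if there is a substitution $\sigma$ respecting $\nabla_1$ with $\nabla_1\sigma\subseteq\nabla_2$ and $\nabla_2\vdash t_1\sigma\approx t_2$. *)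

(* Defs.v *)
From Stdlib Require Import List Arith Bool.
Import ListNotations.

(* atom sorts (SAtm n), base data sorts (SBase n), abstraction sorts [nu]tau *)
Inductive sort : Type :=
| SAtm  : nat -> sort
| SBase : nat -> sort
| SAbs  : nat -> sort -> sort.

(* An atom is a pair (atom sort, name); a variable is a pair (sort, name). *)
Definition atom : Type := (nat * nat)%type.
Definition asort (a : atom) : nat := fst a.
Definition var : Type := (sort * nat)%type.
Definition vsort (X : var) : sort := fst X.
Definition fsym : Type := nat.

Definition atom_eqb (a b : atom) : bool :=
  Nat.eqb (fst a) (fst b) && Nat.eqb (snd a) (snd b).

Definition perm : Type := list (atom * atom).

Definition swap_atom (s : atom * atom) (c : atom) : atom :=
  if atom_eqb c (fst s) then snd s else if atom_eqb c (snd s) then fst s else c.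

(* [s1; ...; sn] acts as s1 o ... o sn *)
Definition perm_app (p : perm) (c : atom) : atom := fold_right swap_atom c p.
Definition perm_inv (p : perm) : perm := rev p.

Definition wf_perm (p : perm) : Prop :=
  forall s, In s p -> asort (fst s) = asort (snd s).

Inductive term : Type :=
| Atm  : atom -> term
| Abs  : atom -> term -> term
| Fn   : fsym -> list term -> term
| Susp : perm -> var -> term.

Fixpoint perm_act (p : perm) (t : term) : term :=
  match t with
  | Atm a => Atm (perm_app p a)
  | Abs a u => Abs (perm_app p a) (perm_act p u)
  | Fn f ts => Fn f (map (perm_act p) ts)
  | Susp q X => Susp (p ++ q) X
  end.

(* substitution application (atom capture allowed), (pi.X)sigma = pi•(X sigma) *)
Definition subst_t : Type := var -> term.

Fixpoint subst (sg : subst_t) (t : term) : term :=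
  match t with
  | Atm a => Atm a
  | Abs a u => Abs a (subst sg u)
  | Fn f ts => Fn f (map (subst sg) ts)
  | Susp p X => perm_act p (sg X)
  end.

(* X sigma, where the variable X as a term is id.X *)
Definition vsub (sg : subst_t) (X : var) : term := subst sg (Susp nil X).

Definition signature : Type := fsym -> list sort * sort.

Inductive has_sort (sig : signature) : term -> sort -> Prop :=
| hs_atm : forall a, has_sort sig (Atm a) (SAtm (asort a))
| hs_abs : forall a t s, has_sort sig t s -> has_sort sig (Abs a t) (SAbs (asort a) s)
| hs_fn  : forall f ts, Forall2 (has_sort sig) ts (fst (sig f)) ->
           has_sort sig (Fn f ts) (snd (sig f))
| hs_susp : forall p X, wf_perm p -> has_sort sig (Susp p X) (vsort X).

Definition wf_subst (sig : signature) (sg : subst_t) : Prop :=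
  forall X, has_sort sig (sg X) (vsort X).

(* a finite set of constraints a # X, represented as a list *)
Definition fctx : Type := list (atom * var).

Inductive fresh (G : fctx) : atom -> term -> Prop :=
| fr_atm : forall a a', a <> a' -> fresh G a (Atm a')
| fr_susp : forall a p X, In (perm_app (perm_inv p) a, X) G -> fresh G a (Susp p X)
| fr_fn : forall a f ts, (forall t, In t ts -> fresh G a t) -> fresh G a (Fn f ts)
| fr_abs_eq : forall a t, fresh G a (Abs a t)
| fr_abs_neq : forall a a' t, a <> a' -> fresh G a t -> fresh G a (Abs a' t).

Inductive aeq (G : fctx) : term -> term -> Prop :=
| aeq_atm : forall a, aeq G (Atm a) (Atm a)
| aeq_abs_eq : forall a t t', aeq G t t' -> aeq G (Abs a t) (Abs a t')
| aeq_abs_neq : forall a a' t t', a <> a' -> asort a = asort a' ->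
    aeq G t (perm_act [(a, a')] t') -> fresh G a t' -> aeq G (Abs a t) (Abs a' t')
| aeq_susp : forall p p' X,
    (forall c, perm_app p c <> perm_app p' c -> In (c, X) G) ->
    aeq G (Susp p X) (Susp p' X)
| aeq_fn : forall f ts ts', Forall2 (aeq G) ts ts' -> aeq G (Fn f ts) (Fn f ts').

(* FC on {a # t}: None = bottom, Some D = the resulting context. *)
Fixpoint fc (a : atom) (t : term) : option fctx :=
  match t with
  | Atm b => if atom_eqb a b then None else Some nil
  | Abs b u => if atom_eqb a b then Some nil else fc a u
  | Fn _ ts =>
      fold_right (fun u acc =>
        match fc a u, acc with
        | Some D1, Some D2 => Some (D1 ++ D2)
        | _, _ => None
        end) (Some nil) ts
  | Susp p X => Some [(perm_app (perm_inv p) a, X)]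
  end.

(* nabla sigma := FC({a # X sigma | a # X in nabla}) *)
Fixpoint nabla_sub (N : fctx) (sg : subst_t) : option fctx :=
  match N with
  | nil => Some nil
  | (a, X) :: N' =>
      match fc a (vsub sg X), nabla_sub N' sg with
      | Some D1, Some D2 => Some (D1 ++ D2)
      | _, _ => None
      end
  end.

Fixpoint occurs_free_unsusp (a : atom) (t : term) : bool :=
  match t with
  | Atm b => atom_eqb a b
  | Abs b u => negb (atom_eqb a b) && occurs_free_unsusp a u
  | Fn _ ts => existsb (occurs_free_unsusp a) ts
  | Susp _ _ => false
  end.

Definition respects (sg : subst_t) (N : fctx) : Prop :=
  forall a X, In (a, X) N -> occurs_free_unsusp a (vsub sg X) = false.

Definition tic : Type := (fctx * term)%type.

Definition tic_le (sig : signature) (c1 c2 : tic) : Prop :=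
  exists sg : subst_t,
    wf_subst sig sg /\ respects sg (fst c1) /\
    (exists D, nabla_sub (fst c1) sg = Some D /\ incl D (fst c2)) /\
    aeq (fst c2) (subst sg (snd c1)) (snd c2).

Fixpoint vars (t : term) : list var :=
  match t with
  | Atm _ => nil
  | Abs _ u => vars u
  | Fn _ ts => flat_map vars ts
  | Susp _ X => [X]
  end.

Definition vars_tic (c : tic) : list var := vars (snd c) ++ map snd (fst c).

(* Main.v *)
Require Import Defs.
From Stdlib Require Import List Arith Bool.
Import ListNotations.

Definition atom_dec (a b : atom) : {a = b} + {a <> b}.
Proof. repeat decide equality. Defined.

Lemma atom_eqb_spec a b : reflect (a = b) (atom_eqb a b).
Proof.
  destruct a as [x y], b as [u v]; unfold atom_eqb; simpl.
  destruct (Nat.eqb_spec x u), (Nat.eqb_spec y v); simpl; constructor; congruence.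
Qed.

Lemma swap_invol s c : swap_atom s (swap_atom s c) = c.
Proof.
  destruct s as [a b]; unfold swap_atom; simpl.
  destruct (atom_eqb_spec c a); subst.
  - destruct (atom_eqb_spec b a); subst; auto.
    destruct (atom_eqb_spec b b); congruence.
  - destruct (atom_eqb_spec c b); subst.
    + destruct (atom_eqb_spec a a); congruence.
    + destruct (atom_eqb_spec c a); try congruence.
      destruct (atom_eqb_spec c b); congruence.
Qed.

Lemma perm_app_app p q c : perm_app (p ++ q) c = perm_app p (perm_app q c).
Proof. unfold perm_app. apply fold_right_app. Qed.

Lemma perm_inv_l p c : perm_app (perm_inv p) (perm_app p c) = c.
Proof.
  unfold perm_inv; induction p as [|s p IH]; simpl; auto.
  rewrite perm_app_app. simpl. rewrite swap_invol. apply IH.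
Qed.

Lemma perm_inv_r p c : perm_app p (perm_app (perm_inv p) c) = c.
Proof.
  pose proof (perm_inv_l (perm_inv p) c) as H. unfold perm_inv in *.
  rewrite rev_involutive in H. exact H.
Qed.

Lemma perm_app_inj p c d : perm_app p c = perm_app p d -> c = d.
Proof.
  intro H. rewrite <- (perm_inv_l p c), <- (perm_inv_l p d), H. reflexivity.
Qed.

Lemma wf_sort p c : wf_perm p -> asort (perm_app p c) = asort c.
Proof.
  induction p as [|[a b] p IH]; intros W; simpl; auto.
  assert (Hab : asort a = asort b) by (apply (W (a,b)); simpl; auto).
  assert (W' : wf_perm p) by (intros s Hs; apply W; simpl; auto).
  unfold swap_atom; simpl.
  destruct (atom_eqb_spec (perm_app p c) a).
  - rewrite <- Hab, <- e. auto.
  - destruct (atom_eqb_spec (perm_app p c) b); auto.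
    rewrite Hab, <- e; auto.
Qed.

Lemma wf_app p q : wf_perm p -> wf_perm q -> wf_perm (p ++ q).
Proof. intros Hp Hq s Hs. apply in_app_or in Hs. destruct Hs; auto. Qed.

Lemma wf_nil : wf_perm nil.
Proof. intros s []. Qed.

Lemma wf_one a b : asort a = asort b -> wf_perm [(a,b)].
Proof. intros H s [<-|[]]; auto. Qed.

Lemma swap_conj p a b c :
  perm_app p (swap_atom (a,b) c) =
  swap_atom (perm_app p a, perm_app p b) (perm_app p c).
Proof.
  unfold swap_atom; simpl.
  destruct (atom_eqb_spec c a); subst.
  - destruct (atom_eqb_spec (perm_app p a) (perm_app p a)); congruence.
  - destruct (atom_eqb_spec (perm_app p c) (perm_app p a)).
    + apply perm_app_inj in e; congruence.
    + destruct (atom_eqb_spec c b); subst.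
      * destruct (atom_eqb_spec (perm_app p b) (perm_app p b)); congruence.
      * destruct (atom_eqb_spec (perm_app p c) (perm_app p b)); auto.
        apply perm_app_inj in e; congruence.
Qed.

Fixpoint term_ind' (P : term -> Prop)
  (Ha : forall a, P (Atm a))
  (Hb : forall a t, P t -> P (Abs a t))
  (Hf : forall f ts, Forall P ts -> P (Fn f ts))
  (Hs : forall p X, P (Susp p X)) (t : term) : P t :=
  match t with
  | Atm a => Ha a
  | Abs a u => Hb a u (term_ind' P Ha Hb Hf Hs u)
  | Fn f ts => Hf f ts ((fix go (l : list term) : Forall P l :=
       match l with
       | nil => Forall_nil P
       | u :: us => Forall_cons u (term_ind' P Ha Hb Hf Hs u) (go us)
       end) ts)
  | Susp p X => Hs p X
  end.

Lemma perm_act_app p q t : perm_act p (perm_act q t) = perm_act (p ++ q) t.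
Proof.
  induction t using term_ind'; simpl; try rewrite perm_app_app; auto.
  - rewrite IHt; auto.
  - f_equal. rewrite map_map. apply map_ext_in. intros u Hu.
    rewrite Forall_forall in H. auto.
  - rewrite app_assoc; auto.
Qed.

Lemma perm_act_nil t : perm_act nil t = t.
Proof.
  induction t using term_ind'; simpl; auto.
  - rewrite IHt; auto.
  - f_equal. rewrite Forall_forall in H. induction ts; simpl; auto.
    rewrite H, IHts; simpl; auto. intros; apply H; simpl; auto.
Qed.

Lemma fresh_perm G p c t :
  fresh G c (perm_act p t) <-> fresh G (perm_app (perm_inv p) c) t.
Proof.
  revert c; induction t using term_ind'; intros c; simpl; split; intro F.
  - inversion F; subst. constructor. intro E; apply H1. rewrite <- E, perm_inv_r; auto.
  - inversion F; subst. constructor. intro E; apply H1. rewrite E, perm_inv_l; auto.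
  - inversion F; subst.
    + rewrite perm_inv_l. constructor.
    + destruct (atom_dec (perm_app (perm_inv p) c) a).
      * subst; constructor.
      * apply fr_abs_neq; auto. apply IHt; auto.
  - inversion F; subst.
    + rewrite perm_inv_r. constructor.
    + apply fr_abs_neq. intro E; apply H2; rewrite E, perm_inv_l; auto.
      apply IHt; auto.
  - inversion F; subst. constructor. intros u Hu.
    rewrite Forall_forall in H. apply H; auto.
    apply H2. apply in_map; auto.
  - inversion F; subst. constructor. intros u Hu.
    apply in_map_iff in Hu. destruct Hu as [v [<- Hv]].
    rewrite Forall_forall in H. apply H; auto.
  - inversion F; subst. constructor. unfold perm_inv in *.
    rewrite rev_app_distr, perm_app_app in H1. auto.
  - inversion F; subst. constructor. unfold perm_inv in *.
    rewrite rev_app_distr, perm_app_app. auto.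
Qed.

Lemma fresh_swap G a b c t :
  fresh G c (perm_act [(a,b)] t) <-> fresh G (swap_atom (a,b) c) t.
Proof. rewrite fresh_perm. reflexivity. Qed.

Definition ext (p q : perm) := forall c, perm_app p c = perm_app q c.

Lemma ext_inv p q : ext p q -> ext (perm_inv p) (perm_inv q).
Proof.
  intros E c. apply (perm_app_inj q). rewrite perm_inv_r, <- E, perm_inv_r. auto.
Qed.

Lemma fresh_ext G p q c t : ext p q -> fresh G c (perm_act p t) -> fresh G c (perm_act q t).
Proof.
  intros E F. apply fresh_perm in F. apply fresh_perm. rewrite <- (ext_inv p q E). auto.
Qed.

Lemma F2_map_r {A B C} (R : A -> C -> Prop) (f : B -> C) xs ys :
  Forall2 R xs (map f ys) <-> Forall2 (fun x y => R x (f y)) xs ys.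
Proof.
  revert xs; induction ys; intros xs; simpl; split; intro H; inversion H; subst; constructor; auto;
  apply IHys; auto.
Qed.

Lemma F2_map_l {A B C} (R : C -> A -> Prop) (f : B -> C) xs ys :
  Forall2 R (map f ys) xs <-> Forall2 (fun y x => R (f y) x) ys xs.
Proof.
  revert xs; induction ys; intros xs; simpl; split; intro H; inversion H; subst; constructor; auto;
  apply IHys; auto.
Qed.

Lemma F2_impl_r {A B} (P : B -> Prop) (R R' : A -> B -> Prop) xs ys :
  Forall P ys -> Forall2 R xs ys -> (forall x y, P y -> R x y -> R' x y) -> Forall2 R' xs ys.
Proof. intros HP H2 Hi; induction H2; inversion HP; subst; constructor; auto. Qed.

Lemma F2_impl_l {A B} (P : A -> Prop) (R R' : A -> B -> Prop) xs ys :
  Forall P xs -> Forall2 R xs ys -> (forall x y, P x -> R x y -> R' x y) -> Forall2 R' xs ys.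
Proof. intros HP H2 Hi; induction H2; inversion HP; subst; constructor; auto. Qed.

Lemma aeq_R G y : forall x r r', aeq G x (perm_act r y) -> ext r r' -> aeq G x (perm_act r' y).
Proof.
  induction y using term_ind'; intros x r r' Ha E; simpl in *.
  - inversion Ha; subst. rewrite E. constructor.
  - inversion Ha; subst.
    + rewrite E. constructor. eapply IHy; eauto.
    + match goal with |- context[perm_app r' ?b] => rewrite <- (E b) end.
      apply aeq_abs_neq; auto.
      * rewrite perm_act_app in *. eapply IHy; eauto.
        intro c. rewrite !perm_app_app. rewrite !E. auto.
      * eapply fresh_ext; eauto.
  - inversion Ha; subst. constructor.
    apply F2_map_r. match goal with H: Forall2 _ _ (map _ _) |- _ => apply (proj1 (F2_map_r _ _ _ _)) in H end.
    eapply F2_impl_r; eauto. intros x0 y0 P R0. simpl in *. eapply P; eauto.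
  - inversion Ha; subst. constructor. intros c Hc. match goal with H: forall _, _ -> In _ _ |- _ => apply H end.
    rewrite perm_app_app in *. rewrite E. auto.
Qed.

Lemma F2_map_both {A B} (R : B -> B -> Prop) (f g : A -> B) xs ys :
  Forall2 (fun x y => R (f x) (g y)) xs ys -> Forall2 R (map f xs) (map g ys).
Proof. induction 1; simpl; constructor; auto. Qed.

Lemma aeq_equiv G p t : forall u, wf_perm p -> aeq G t u -> aeq G (perm_act p t) (perm_act p u).
Proof.
  induction t using term_ind'; intros u W Ha; inversion Ha; subst; simpl.
  - constructor.
  - constructor. auto.
  - apply aeq_abs_neq.
    + intro E; apply perm_app_inj in E; auto.
    + rewrite !wf_sort; auto.
    + rewrite perm_act_app. apply aeq_R with (r := p ++ [(a, a')]).
      * rewrite <- perm_act_app. apply IHt; eauto.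
      * intro c. rewrite !perm_app_app. simpl. apply swap_conj.
    + apply fresh_perm. rewrite perm_inv_l. auto.
  - constructor. apply F2_map_both.
    eapply F2_impl_l; [eassumption|eassumption|]. intros x y P R0. simpl in P. apply P; auto.
  - constructor. intros c Hc. match goal with H: forall _, _ -> In _ _ |- _ => apply H end.
    rewrite !perm_app_app in Hc. intro E; apply Hc; rewrite E; auto.
Qed.

Lemma aeq_ds G t : forall p p', wf_perm p -> wf_perm p' ->
  (forall c, perm_app p c <> perm_app p' c -> fresh G c t) ->
  aeq G (perm_act p t) (perm_act p' t).
Proof.
  induction t using term_ind'; intros q q' W W' D; simpl.
  - destruct (atom_dec (perm_app q a) (perm_app q' a)) as [E|NE].
    + rewrite E; constructor.
    + specialize (D a NE). inversion D. congruence.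
  - destruct (atom_dec (perm_app q a) (perm_app q' a)) as [E|NE].
    + rewrite E. constructor. apply IHt; auto.
      intros c Hc. specialize (D c Hc). inversion D; subst; auto. congruence.
    + apply aeq_abs_neq; auto.
      * rewrite !wf_sort; auto.
      * rewrite perm_act_app. apply IHt; auto.
        { apply wf_app; auto. apply wf_one. rewrite !wf_sort; auto. }
        intros c Hc. rewrite perm_app_app in Hc. simpl in Hc.
        assert (cb : c <> a).
        { intro; subst. apply Hc. unfold swap_atom; simpl.
          destruct (atom_eqb_spec (perm_app q' a) (perm_app q a)); auto.
          destruct (atom_eqb_spec (perm_app q' a) (perm_app q' a)); congruence. }
        destruct (atom_dec (perm_app q c) (perm_app q' c)) as [E|NE2].
        { exfalso. apply Hc. rewrite <- E. unfold swap_atom; simpl.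
          destruct (atom_eqb_spec (perm_app q c) (perm_app q a)).
          - apply perm_app_inj in e; congruence.
          - destruct (atom_eqb_spec (perm_app q c) (perm_app q' a)); auto.
            rewrite E in e. apply perm_app_inj in e; congruence. }
        specialize (D c NE2). inversion D; subst; auto. congruence.
      * apply fresh_perm.
        set (d := perm_app (perm_inv q') (perm_app q a)). 
        assert (Hd : perm_app q' d = perm_app q a) by (unfold d; apply perm_inv_r). clearbody d.
        assert (da : d <> a) by (intro E; rewrite E in Hd; congruence).
        assert (Hne : perm_app q d <> perm_app q' d).
        { rewrite Hd. intro E; apply perm_app_inj in E; auto. }
        specialize (D d Hne). inversion D; subst; auto. congruence.
  - constructor. apply F2_map_both.
    induction ts; constructor; inversion H; subst.
    + apply H2; auto. intros c Hc. specialize (D c Hc). inversion D; subst.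
      apply H4; simpl; auto.
    + apply IHts; auto. intros c Hc. specialize (D c Hc). inversion D; subst.
      constructor. intros; apply H4; simpl; auto.
  - constructor. intros c Hc. rewrite !perm_app_app in Hc.
    specialize (D _ Hc). inversion D; subst. rewrite perm_inv_l in H1. auto.
Qed.

Lemma aeq_refl G t : aeq G t t.
Proof.
  rewrite <- (perm_act_nil t). apply aeq_ds; try apply wf_nil.
  intros c H; congruence.
Qed.

Lemma fresh_pres G t : forall c u, fresh G c t -> aeq G t u -> fresh G c u.
Proof.
  induction t using term_ind'; intros c u F Ha; inversion Ha; subst.
  - auto.
  - inversion F; subst; [constructor|]. apply fr_abs_neq; eauto.
  - destruct (atom_dec c a'). { subst; constructor. }
    destruct (atom_dec c a). { subst. apply fr_abs_neq; auto. }
    inversion F; subst; try congruence.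
    apply fr_abs_neq; auto.
    assert (F2 : fresh G c (perm_act [(a, a')] t')) by (eapply IHt; eauto).
    apply fresh_swap in F2. unfold swap_atom in F2; simpl in F2.
    destruct (atom_eqb_spec c a); try congruence.
    destruct (atom_eqb_spec c a'); try congruence.
  - inversion F; subst. constructor.
    match goal with H2: Forall2 _ _ _ |- _ => induction H2 end.
    + intros _ [].
    + inversion H; subst. intros u [<-|Hu].
      * eapply H5; eauto. apply H2; simpl; auto.
      * apply IHForall2; auto.
        { constructor. intros; apply H2; simpl; auto. }
        { constructor. auto. }
        { intros; apply H2; simpl; auto. }
  - inversion F; subst. constructor.
    destruct (atom_dec (perm_app (perm_inv p) c) (perm_app (perm_inv p') c)) as [E|NE].
    + rewrite <- E; auto.
    + match goal with H: forall _, _ -> In _ _ |- _ => apply H end.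
      rewrite perm_inv_r. intro E. apply NE. rewrite <- E at 1. rewrite perm_inv_l. reflexivity.
Qed.

Ltac swap_tac := unfold swap_atom; simpl;
  repeat (match goal with
          | |- context[atom_eqb ?x ?y] => destruct (atom_eqb_spec x y)
          | H : context[atom_eqb ?x ?y] |- _ => destruct (atom_eqb_spec x y)
          end; subst);
  try congruence.

Lemma aeq_trans G x : forall y z, aeq G x y -> aeq G y z -> aeq G x z.
Proof.
  induction x using term_ind'; intros y z Hxy Hyz; inversion Hxy; subst; inversion Hyz; subst.
  - constructor.
  - constructor. eauto.
  - apply aeq_abs_neq; eauto.
  -
    apply aeq_abs_neq; auto.
    + eapply IHx; eauto. apply aeq_equiv; auto. apply wf_one; auto.
    + eapply fresh_pres; eauto.
  - rename a' into b, a'0 into c.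
    assert (E1 : aeq G x (perm_act ([(a, b)] ++ [(b, c)]) t'0)).
    { eapply IHx; eauto. rewrite <- perm_act_app. apply aeq_equiv; auto. apply wf_one; auto. }
    destruct (atom_dec a c).
    + subst. constructor. rewrite <- (perm_act_nil t'0). eapply aeq_R; eauto.
      intro d. simpl. swap_tac.
    + assert (Fa : fresh G a t'0).
      { assert (F1 : fresh G a (perm_act [(b, c)] t'0)) by (eapply fresh_pres; eauto).
        apply fresh_swap in F1. revert F1. swap_tac; auto. }
      apply aeq_abs_neq; auto; try congruence.
      eapply IHx; eauto. apply aeq_ds.
      * apply wf_app; apply wf_one; auto.
      * apply wf_one; congruence.
      * intros d Hd. destruct (atom_dec d a); subst; auto.
        destruct (atom_dec d b); subst; auto.
        exfalso; apply Hd. simpl. swap_tac.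
  - constructor.
    match goal with H1 : Forall2 _ ts ?l, H2 : Forall2 _ ?l ?m |- Forall2 _ ts ?m =>
      revert H1 H2; generalize l m end.
    clear Hxy Hyz. induction ts; intros l m H1 H2; inversion H1; subst; inversion H2; subst; constructor.
    + inversion H; subst. eauto.
    + inversion H; subst. eauto.
  - constructor. intros c Hc.
    destruct (atom_dec (perm_app p c) (perm_app p' c)); auto.
    match goal with H: forall _, _ -> In _ _ |- _ => apply H end. congruence.
Qed.

Lemma aeq_sym G t : forall u, aeq G t u -> aeq G u t.
Proof.
  induction t using term_ind'; intros u H0; inversion H0; subst.
  - constructor.
  - constructor. auto.
  - match goal with H5 : aeq G t (perm_act _ _) |- _ => assert (IH := IHt _ H5) end.
    apply aeq_abs_neq; auto.
    + assert (E1 : aeq G (perm_act ([(a, a')] ++ [(a, a')]) t') (perm_act [(a, a')] t)).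
      { rewrite <- perm_act_app. apply aeq_equiv; auto. apply wf_one; auto. }
      assert (E0 : aeq G t' (perm_act ([(a, a')] ++ [(a, a')]) t')).
      { rewrite <- (perm_act_nil t') at 1. apply aeq_ds.
        - apply wf_nil.
        - apply wf_app; apply wf_one; auto.
        - intros c Hc. exfalso. apply Hc. simpl. swap_tac. }
      eapply aeq_R. eapply aeq_trans; eauto. intro c; simpl; swap_tac.
    + eapply fresh_pres; eauto. apply fresh_swap. match goal with H6 : fresh G a t' |- _ => revert H6 end. swap_tac.
  - constructor. apply Forall2_flip.
    match goal with H1 : Forall2 _ ts ?l |- _ => revert H1; generalize l end.
    clear H0. induction ts; intros l H1; inversion H1; subst; constructor.
    + inversion H; subst. eauto.
    + inversion H; subst. eauto.
  - constructor. intros c Hc. 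
    match goal with H: forall _, _ -> In _ _ |- _ => apply H end. congruence.
Qed.

Lemma has_sort_perm sig u : forall q s, wf_perm q -> has_sort sig u s -> has_sort sig (perm_act q u) s.
Proof.
  induction u using term_ind'; intros q s W Hs; inversion Hs; subst; simpl.
  - rewrite <- (wf_sort q a W). constructor.
  - rewrite <- (wf_sort q a W). constructor. auto.
  - constructor. apply F2_map_l.
    eapply F2_impl_l; [eassumption|eassumption|]. simpl. intros x y P R0. auto.
  - constructor. apply wf_app; auto.
Qed.


Lemma has_sort_subst sig sg t : forall s, wf_subst sig sg -> has_sort sig t s -> has_sort sig (subst sg t) s.
Proof.
  induction t using term_ind'; intros s W Hs; inversion Hs; subst; simpl.
  - constructor.
  - constructor. auto.
  - constructor. apply F2_map_l.
    eapply F2_impl_l; [eassumption|eassumption|]. simpl. intros x y P R0. auto.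
  - apply has_sort_perm; auto.
Qed.

Lemma fresh_fc G a u : fresh G a u -> exists D, fc a u = Some D /\ incl D G.
Proof.
  revert a; induction u using term_ind'; intros c F; inversion F; subst; simpl.
  - destruct (atom_eqb_spec c a); try congruence. exists nil; split; auto. intros x [].
  - destruct (atom_eqb_spec a a); try congruence. exists nil; split; auto. intros x [].
  - destruct (atom_eqb_spec c a); try congruence. auto.
  - clear F. induction ts; simpl.
    + exists nil; split; auto. intros x [].
    + inversion H; subst.
      destruct (H3 c) as [D1 [E1 I1]]. apply H2; simpl; auto.
      destruct IHts as [D2 [E2 I2]]; auto. intros; apply H2; simpl; auto.
      rewrite E1, E2. exists (D1 ++ D2); split; auto. apply incl_app; auto.
  - exists [(perm_app (perm_inv p) c, X)]. split; auto. intros x [<-|[]]; auto.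
Qed.

Lemma fc_fresh G a u : forall D, fc a u = Some D -> incl D G -> fresh G a u.
Proof.
  revert a; induction u using term_ind'; intros c D E I; simpl in E.
  - destruct (atom_eqb_spec c a); try congruence. constructor; auto.
  - destruct (atom_eqb_spec c a). subst; constructor.
    apply fr_abs_neq; eauto.
  - constructor. revert D E I. induction ts; simpl; intros D E I t Ht; [destruct Ht|].
    inversion H; subst.
    destruct (fc c a) eqn:E1; try discriminate.
    match type of E with context[match ?x with _ => _ end] => destruct x eqn:E2 end; try discriminate.
    inversion E; subst.
    destruct Ht as [<-|Ht].
    + eapply H2; eauto. intros x Hx; apply I, in_or_app; auto.
    + eapply IHts; eauto. intros x Hx; apply I, in_or_app; auto.
  - inversion E; subst. constructor. apply I; simpl; auto.
Qed.

Lemma fresh_nofree G a u : fresh G a u -> occurs_free_unsusp a u = false.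
Proof.
  revert a; induction u using term_ind'; intros c F; inversion F; subst; simpl;
  try (repeat match goal with |- context[atom_eqb ?x ?y] => destruct (atom_eqb_spec x y) end;
       simpl; try congruence; auto; fail).
  clear F. induction ts; simpl; auto. inversion H; subst.
  rewrite H3; simpl; auto. apply IHts; auto. intros; apply H2; simpl; auto.
  apply H2; simpl; auto.
Qed.

Lemma vsub_eq sg X : vsub sg X = sg X.
Proof. unfold vsub; simpl. apply perm_act_nil. Qed.

Lemma nabla_sub_ok G N sg : (forall a X, In (a, X) N -> fresh G a (vsub sg X)) ->
  exists D, nabla_sub N sg = Some D /\ incl D G.
Proof.
  induction N as [|[a X] N IH]; intros F; simpl.
  - exists nil; split; auto. intros x [].
  - destruct (fresh_fc G a (vsub sg X)) as [D1 [E1 I1]]. apply F; simpl; auto.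
    destruct IH as [D2 [E2 I2]]. intros; apply F; simpl; auto.
    rewrite E1, E2. exists (D1 ++ D2); split; auto. apply incl_app; auto.
Qed.

Lemma nabla_sub_fresh G N sg D : nabla_sub N sg = Some D -> incl D G ->
  forall a X, In (a, X) N -> fresh G a (vsub sg X).
Proof.
  revert D; induction N as [|[b Y] N IH]; intros D E I a X Hin; simpl in *; [destruct Hin|].
  destruct (fc b (vsub sg Y)) eqn:E1; try discriminate.
  destruct (nabla_sub N sg) eqn:E2; try discriminate.
  inversion E; subst.
  destruct Hin as [Heq|Hin].
  - inversion Heq; subst. eapply fc_fresh; eauto. intros x Hx; apply I, in_or_app; auto.
  - eapply IH; eauto. intros x Hx; apply I, in_or_app; auto.
Qed.

Lemma subst_agree sg sg' t : (forall X, In X (vars t) -> sg X = sg' X) -> subst sg t = subst sg' t.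
Proof.
  induction t using term_ind'; intros Hag; simpl in *; auto.
  - rewrite IHt; auto.
  - f_equal. apply map_ext_in. intros u Hu. rewrite Forall_forall in H. apply H; auto.
    intros X HX. apply Hag. apply in_flat_map. eauto.
  - rewrite Hag; auto.
Qed.


Definition sort_dec (s t : sort) : {s = t} + {s <> t}.
Proof. decide equality; apply Nat.eq_dec. Defined.
Definition var_dec (X Y : var) : {X = Y} + {X <> Y}.
Proof. decide equality; [apply Nat.eq_dec | apply sort_dec]. Defined.

Theorem lemma2 (sig : signature) (N1 N2 : fctx) (t1 t2 : term) (s1 s2 : sort)
  (Ht1 : has_sort sig t1 s1) (Ht2 : has_sort sig t2 s2)
  (Hdisj : forall X, In X (vars_tic (N1, t1)) -> ~ In X (vars_tic (N2, t2))) :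
  (exists (G : fctx) (s : term),
      (exists so, has_sort sig s so) /\
      tic_le sig (N1, t1) (G, s) /\ tic_le sig (N2, t2) (G, s))
  <->
  (exists (G : fctx) (sg : subst_t),
      wf_subst sig sg /\
      aeq G (subst sg t1) (subst sg t2) /\
      (forall a X, In (a, X) (N1 ++ N2) -> fresh G a (vsub sg X))).
Proof.
  split.
  - intros [G [s [_ [[sg1 [W1 [_ [[D1 [E1 I1]] A1]]]] [sg2 [W2 [_ [[D2 [E2 I2]] A2]]]]]]]].
    simpl in *.
    set (sg := fun X => if in_dec var_dec X (vars_tic (N1, t1)) then sg1 X else sg2 X).
    assert (S1 : forall X, In X (vars_tic (N1, t1)) -> sg X = sg1 X).
    { intros X HX. unfold sg. destruct (in_dec var_dec X (vars_tic (N1, t1))); tauto. }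
    assert (S2 : forall X, In X (vars_tic (N2, t2)) -> sg X = sg2 X).
    { intros X HX. unfold sg. destruct (in_dec var_dec X (vars_tic (N1, t1))); auto.
      exfalso; eapply Hdisj; eauto. }
    exists G, sg. split; [|split].
    + intro X. unfold sg. destruct (in_dec var_dec X (vars_tic (N1, t1))); auto.
    + rewrite (subst_agree sg sg1 t1), (subst_agree sg sg2 t2).
      * eapply aeq_trans; eauto. apply aeq_sym; auto.
      * intros X HX; apply S2; unfold vars_tic; simpl; apply in_or_app; auto.
      * intros X HX; apply S1; unfold vars_tic; simpl; apply in_or_app; auto.
    + intros a X Hin. rewrite vsub_eq. apply in_app_or in Hin. destruct Hin as [Hin|Hin].
      * rewrite S1. rewrite <- vsub_eq. eapply nabla_sub_fresh; eauto.
        unfold vars_tic; simpl; apply in_or_app; right. apply in_map_iff. exists (a, X); auto.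
      * rewrite S2. rewrite <- vsub_eq. eapply nabla_sub_fresh; eauto.
        unfold vars_tic; simpl; apply in_or_app; right. apply in_map_iff. exists (a, X); auto.
  - intros [G [sg [W [A F]]]].
    exists G, (subst sg t2). split; [|split].
    + exists s2. apply has_sort_subst; auto.
    + exists sg. simpl. split; [auto|split; [|split]].
      * intros a X Hin. apply (fresh_nofree G). apply F, in_or_app; auto.
      * apply nabla_sub_ok. intros; apply F, in_or_app; auto.
      * auto.
    + exists sg. simpl. split; [auto|split; [|split]].
      * intros a X Hin. apply (fresh_nofree G). apply F, in_or_app; auto.
      * apply nabla_sub_ok. intros; apply F, in_or_app; auto.
      * apply aeq_refl.
Qed.
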